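(* Let $p$ be holomorphic and not constant on a neighborhood $\mathcal{B}$ of $z_0\in\mathbb{C}$, with $p(z)=p(z_0)-p_0(z-z_0)^\mu(1-\phi(z))$ on $\mathcal{B}$, $\mu\in\mathbb{Z}_{\ge1}$, $p_0\neq0$, $\phi$ holomorphic, $\phi(z_0)=0$. Let $\omega_0=\arg p_0$, $\theta_\ell=-\omega_0/\mu+2\pi\ell/\mu$, and let $R_p>0$ and the functions $f_\ell$ ($\ell\in\mathbb{Z}$) be as described in the context. Then $$f_{2\ell-1}(r)<\theta_\ell<f_{2\ell}(r)\quad\text{for all } r\in[0,R_p],\ \ell\in\mathbb{Z},$$ and $$\mathrm{Re}\big(p(z_0+re^{i\theta_\ell})-p(z_0)\big)<0\quad\text{for all } r\in(0,R_p],\ \ell\in\mathbb{Z}.$$ More generally, for every $r\in(0,R_p]$, one has $\mathrm{Re}\big(p(z_0+re^{i\theta})-p(z_0)\big)<0$ if and only if $f_{2\ell-1}(r)<\theta<f_{2\ell}(r)$ for some $\ell\in\mathbb{Z}$.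
   Context: $R_p>0$ is such that the closed disk of radius $R_p$ about $z_0$ lies in $\mathcal{B}$, and with $\delta_\ell=-\omega_0/\mu+\pi(\ell+1/2)/\mu$: all solutions $(r,\theta)$, $r\in[0,R_p]$, of $\mathrm{Re}\big(p(z_0+re^{i\theta})-p(z_0)\big)/r^\mu=0$ (at $r=0$ meaning $-|p_0|\cos(\omega_0+\mu\theta)=0$) are exactly the pairs $(r,f_\ell(r))$, $\ell\in\mathbb{Z}$, where each $f_\ell$ is differentiable on an interval containing $[0,R_p]$, $f_\ell(0)=\delta_\ell$ and $|f_\ell(r)-\delta_\ell|\le\pi/(4\mu)$ for $r\in[0,R_p]$. $\arg$ takes values in $(-\pi,\pi]$. *)

(* Defs.v *)
From Stdlib Require Import Reals ZArith.
From Coquelicot Require Import Coquelicot.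
Open Scope R_scope.

Definition Cexpi (t : R) : C := (cos t, sin t).

Definition is_arg (z : C) (w : R) : Prop :=
  -PI < w <= PI /\ z = Cmult (RtoC (Cmod z)) (Cexpi w).

Definition holomorphic_on (f : C -> C) (B : C -> Prop) : Prop :=
  forall z, B z -> ex_derive (K := C_AbsRing) (V := C_NormedModule) f z.

Definition diff_around (f : R -> R) (Rp : R) : Prop :=
  exists a b, a < 0 /\ Rp < b /\ forall r, a < r < b -> ex_derive f r.

(* Main.v *)
Require Import Defs.
From Stdlib Require Import Reals ZArith Lra Lia.
From Coquelicot Require Import Coquelicot.
Open Scope R_scope.
Lemma cos_2l (l : Z) : cos (2 * IZR l * PI) = 1.
Proof.
  destruct (Z.le_gt_cases 0 l) as [H|H].
  - rewrite <- (Z2Nat.id l H), <- INR_IZR_INZ.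
    rewrite <- (Rplus_0_l (2 * _ * PI)), cos_period. apply cos_0.
  - assert (E : l = (- Z.of_nat (Z.to_nat (- l)))%Z) by lia.
    rewrite E, opp_IZR, <- INR_IZR_INZ.
    replace (2 * - INR (Z.to_nat (- l)) * PI) with (- (0 + 2 * INR (Z.to_nat (- l)) * PI)) by ring.
    rewrite cos_neg, cos_period. apply cos_0.
Qed.
Lemma cos_piZ_even (l : Z) : cos (PI * IZR (2 * l)) = 1.
Proof. rewrite mult_IZR. replace (PI * (2 * IZR l)) with (2 * IZR l * PI) by ring. apply cos_2l. Qed.

Lemma cos_piZ_odd (l : Z) : cos (PI * IZR (2 * l + 1)) = -1.
Proof. rewrite plus_IZR, mult_IZR.
  replace (PI * (2 * IZR l + 1)) with (2 * IZR l * PI + PI) by ring.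
  rewrite neg_cos, cos_2l. ring. Qed.

Lemma ivt_zero (g : R -> R) : continuity g -> forall a b, g a * g b <= 0 ->
  exists x, Rmin a b <= x <= Rmax a b /\ g x = 0.
Proof.
  intros Hc a b Hab.
  assert (Rmin (g a) (g b) <= 0 <= Rmax (g a) (g b)).
  { unfold Rmin, Rmax; destruct (Rle_dec (g a) (g b)); split; nra. }
  destruct (IVT_gen g a b 0 Hc H) as [x Hx]. exists x; exact Hx.
Qed.


Lemma Cpow_polar (r t : R) (n : nat) :
  Cpow (Cmult (RtoC r) (Cexpi t)) n = Cmult (RtoC (r ^ n)) (Cexpi (INR n * t)).
Proof.
  induction n as [|n IH].
  - simpl. unfold Cexpi. rewrite Rmult_0_l, cos_0, sin_0. unfold Cmult, RtoC; simpl. apply injective_projections; simpl; ring.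
  - change (Cpow (Cmult (RtoC r) (Cexpi t)) (S n)) with (Cmult (Cmult (RtoC r) (Cexpi t)) (Cpow (Cmult (RtoC r) (Cexpi t)) n)).
    rewrite IH, S_INR. unfold Cmult, RtoC, Cexpi; simpl.
    replace ((INR n + 1) * t) with (t + INR n * t) by ring.
    rewrite cos_plus, sin_plus. f_equal; ring.
Qed.
Definition gam (z0 : C) (r th : R) : C := (fst z0 + r * cos th, snd z0 + r * sin th).
Definition Gf (p0 : C) (phi : C -> C) (z0 : C) (u r th : R) : R :=
  - ((fst p0 * cos (u*th) - snd p0 * sin (u*th)) * (1 - fst (phi (gam z0 r th)))
     + (fst p0 * sin (u*th) + snd p0 * cos (u*th)) * snd (phi (gam z0 r th))).

Lemma cont_conv (g : R -> R) (x : R) : continuity_pt g x -> continuous g x.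
Proof. intro H. apply continuity_pt_filterlim in H. exact H. Qed.
Lemma cont_conv' (g : R -> R) (x : R) : continuous g x -> continuity_pt g x.
Proof. intro H. apply continuity_pt_filterlim. exact H. Qed.

Lemma gam_cont (z0 : C) (rho th : R -> R) (t : R) :
  continuity rho -> continuity th ->
  @continuous R_UniformSpace C_UniformSpace (fun s => gam z0 (rho s) (th s)) t.
Proof.
  intros Hr Ht. unfold gam.
  apply (continuous_comp_2 (U:=R_UniformSpace) (V:=R_UniformSpace) (W:=R_UniformSpace) (X:=C_UniformSpace)
    (fun s => fst z0 + rho s * cos (th s)) (fun s => snd z0 + rho s * sin (th s)) (fun a b => (a, b))).
  - apply cont_conv. apply continuity_pt_plus. apply continuity_pt_const; intros ? ?; reflexivity.
    apply continuity_pt_mult. apply Hr. apply (continuity_pt_comp th cos). apply Ht. apply continuity_cos.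
  - apply cont_conv. apply continuity_pt_plus. apply continuity_pt_const; intros ? ?; reflexivity.
    apply continuity_pt_mult. apply Hr. apply (continuity_pt_comp th sin). apply Ht. apply continuity_sin.
  - apply (continuous_ext (fun x : R * R => x)). intros [a b]; reflexivity.
    apply (continuous_id (U := prod_UniformSpace R_UniformSpace R_UniformSpace)).
Qed.

Lemma Gf_cont (p0 : C) (phi : C -> C) (z0 : C) (u : R) (rho th : R -> R) :
  continuity rho -> continuity th ->
  (forall t, @continuous C_UniformSpace C_UniformSpace phi (gam z0 (rho t) (th t))) ->
  continuity (fun t => Gf p0 phi z0 u (rho t) (th t)).
Proof.
  intros Hr Ht Hphi t.
  assert (Ha : continuity_pt (fun s => fst (phi (gam z0 (rho s) (th s)))) t).
  { apply cont_conv'.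
    apply (continuous_comp (U:=R_UniformSpace) (V:=C_UniformSpace) (W:=R_UniformSpace) (fun s => phi (gam z0 (rho s) (th s))) fst).
    apply (continuous_comp (U:=R_UniformSpace) (V:=C_UniformSpace) (W:=C_UniformSpace) (fun s => gam z0 (rho s) (th s)) phi).
    apply gam_cont; assumption. apply Hphi.
    destruct (phi (gam z0 (rho t) (th t))). apply (continuous_fst (U:=R_UniformSpace) (V:=R_UniformSpace)). }
  assert (Hb : continuity_pt (fun s => snd (phi (gam z0 (rho s) (th s)))) t).
  { apply cont_conv'.
    apply (continuous_comp (U:=R_UniformSpace) (V:=C_UniformSpace) (W:=R_UniformSpace) (fun s => phi (gam z0 (rho s) (th s))) snd).
    apply (continuous_comp (U:=R_UniformSpace) (V:=C_UniformSpace) (W:=C_UniformSpace) (fun s => gam z0 (rho s) (th s)) phi).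
    apply gam_cont; assumption. apply Hphi.
    destruct (phi (gam z0 (rho t) (th t))). apply (continuous_snd (U:=R_UniformSpace) (V:=R_UniformSpace)). }
  assert (Hc : continuity_pt (fun s => cos (u * th s)) t).
  { apply (continuity_pt_comp (fun s => u * th s) cos). apply continuity_pt_mult.
    apply continuity_pt_const; intros ? ?; reflexivity. apply Ht. apply continuity_cos. }
  assert (Hs : continuity_pt (fun s => sin (u * th s)) t).
  { apply (continuity_pt_comp (fun s => u * th s) sin). apply continuity_pt_mult.
    apply continuity_pt_const; intros ? ?; reflexivity. apply Ht. apply continuity_sin. }
  assert (K : forall c : R, continuity_pt (fun _ => c) t).
  { intro c. apply continuity_pt_const; intros ? ?; reflexivity. }
  unfold Gf.
  apply continuity_pt_opp. apply continuity_pt_plus; apply continuity_pt_mult.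
  - apply continuity_pt_minus; apply continuity_pt_mult; auto.
  - apply continuity_pt_minus; auto.
  - apply continuity_pt_plus; apply continuity_pt_mult; auto.
  - exact Hb.
Qed.

Lemma z_eq (z0 : C) (r th : R) : Cplus z0 (Cmult (RtoC r) (Cexpi th)) = gam z0 r th.
Proof. destruct z0. unfold gam, Cexpi, Cplus, Cmult, RtoC; simpl. apply injective_projections; simpl; ring. Qed.

Lemma gam_minus (z0 : C) (r th : R) : Cminus (gam z0 r th) z0 = Cmult (RtoC r) (Cexpi th).
Proof. destruct z0. unfold gam, Cexpi, Cminus, Cplus, Copp, Cmult, RtoC; simpl. apply injective_projections; simpl; ring. Qed.

Lemma Cmod_gam (z0 : C) (r th : R) : Cmod (Cminus (gam z0 r th) z0) = Rabs r.
Proof.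
  rewrite gam_minus. unfold Cmod, Cexpi, Cmult, RtoC; simpl.
  replace ((r * cos th - 0 * sin th) * ((r * cos th - 0 * sin th) * 1) +
     (r * sin th + 0 * cos th) * ((r * sin th + 0 * cos th) * 1)) with (Rsqr r * (Rsqr (sin th) + Rsqr (cos th))) by (unfold Rsqr; ring).
  rewrite sin2_cos2, Rmult_1_r. apply sqrt_Rsqr_abs.
Qed.

Lemma parity (m : Z) : exists l, m = (2 * l)%Z \/ m = (2 * l + 1)%Z.
Proof. exists (m / 2)%Z. pose proof (Z.div_mod m 2 ltac:(lia)). pose proof (Z.mod_pos_bound m 2 ltac:(lia)). lia. Qed.
Lemma loc_conv (x : C) (P : C -> Prop) :
  @locally (AbsRing_UniformSpace C_AbsRing) x P -> @locally C_UniformSpace x P.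
Proof.
  intros [eps H]. exists (pos_div_2 eps). intros y Hy. apply H.
  destruct x as [x1 x2], y as [y1 y2]. destruct Hy as [H1 H2].
  unfold ball in *; simpl in *. unfold AbsRing_ball, abs, minus, plus, opp in *; simpl in *.
  eapply Rle_lt_trans. apply Cmod_2Rmax. simpl.
  assert (S2 : sqrt 2 < 2).
  { rewrite <- (sqrt_pow2 2) at 2 by lra. apply sqrt_lt_1; lra. }
  assert (Rmax (Rabs (y1 + - x1)) (Rabs (y2 + - x2)) < eps / 2).
  { unfold Rmax; destruct Rle_dec; assumption. }
  pose proof (sqrt_pos 2). pose proof (Rabs_pos (y1 + - x1)).
  assert (0 <= Rmax (Rabs (y1 + - x1)) (Rabs (y2 + - x2))) by (unfold Rmax; destruct Rle_dec; auto; apply Rabs_pos).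
  nra.
Qed.

Theorem corollary2p2
  (B : C -> Prop) (z0 : C) (p phi : C -> C) (mu : nat) (p0 : C)
  (omega0 Rp : R) (f : Z -> R -> R)
  (HBopen : open B) (HBz0 : B z0)
  (Hp : holomorphic_on p B)
  (Hnc : exists z, B z /\ p z <> p z0)
  (Hmu : (1 <= mu)%nat) (Hp0 : p0 <> RtoC 0)
  (Hphi : holomorphic_on phi B) (Hphi0 : phi z0 = RtoC 0)
  (Hform : forall z, B z ->
     p z = Cminus (p z0) (Cmult p0 (Cmult (Cpow (Cminus z z0) mu) (Cminus (RtoC 1) (phi z)))))
  (Homega : is_arg p0 omega0)
  (HRp : 0 < Rp)
  (Hdisk : forall z, Cmod (Cminus z z0) <= Rp -> B z)
  (Hfdiff : forall l, diff_around (f l) Rp)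
  (Hf0 : forall l, f l 0 = - omega0 / INR mu + PI * (IZR l + 1/2) / INR mu)
  (Hfclose : forall l r, 0 <= r <= Rp ->
     Rabs (f l r - (- omega0 / INR mu + PI * (IZR l + 1/2) / INR mu)) <= PI / (4 * INR mu))
  (Hzeros0 : forall th,
     - Cmod p0 * cos (omega0 + INR mu * th) = 0 <-> exists l, th = f l 0)
  (Hzeros : forall r th, 0 < r <= Rp ->
     (Re (Cminus (p (Cplus z0 (Cmult (RtoC r) (Cexpi th)))) (p z0)) / r ^ mu = 0
      <-> exists l, th = f l r)) :
  let theta := fun l : Z => - omega0 / INR mu + 2 * PI * IZR l / INR mu in
  (forall l r, 0 <= r <= Rp -> f (2 * l - 1)%Z r < theta l < f (2 * l)%Z r) /\
  (forall l r, 0 < r <= Rp ->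
     Re (Cminus (p (Cplus z0 (Cmult (RtoC r) (Cexpi (theta l))))) (p z0)) < 0) /\
  (forall r th, 0 < r <= Rp ->
     (Re (Cminus (p (Cplus z0 (Cmult (RtoC r) (Cexpi th)))) (p z0)) < 0
      <-> exists l, f (2 * l - 1)%Z r < th < f (2 * l)%Z r)).
Proof.
  intros theta.
  destruct Homega as [_ Hpolar].
  assert (Hu : 0 < INR mu) by (apply lt_0_INR; lia).
  set (u := INR mu) in *.
  set (c := - omega0 / u).
  set (q := PI / u).
  assert (Hq : 0 < q) by (unfold q; apply Rdiv_lt_0_compat; [apply PI_RGT_0 | exact Hu]).
  assert (Hb : forall k r, 0 <= r <= Rp ->
            c + q * (IZR k + 1/2) - q/4 <= f k r <= c + q * (IZR k + 1/2) + q/4).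
  { intros k r Hr. specialize (Hfclose k r Hr). apply Rabs_le_between' in Hfclose.
    replace (c + q * (IZR k + 1/2)) with (- omega0 / u + PI * (IZR k + 1 / 2) / u)
      by (unfold c, q; field; lra).
    replace (q/4) with (PI / (4 * u)) by (unfold q; field; lra). exact Hfclose. }
  assert (Hmono : forall k k' r, 0 <= r <= Rp -> (k < k')%Z -> f k r < f k' r).
  { intros k k' r Hr Hk.
    assert (IZR k + 1 <= IZR k') by (rewrite <- plus_IZR; apply IZR_le; lia).
    pose proof (Hb k r Hr). pose proof (Hb k' r Hr).
    assert (q * (IZR k + 1) <= q * IZR k') by (apply Rmult_le_compat_l; lra).
    lra. }
  assert (Hmonole : forall k k' r, 0 <= r <= Rp -> (k <= k')%Z -> f k r <= f k' r).
  { intros k k' r Hr Hk. destruct (Z.eq_dec k k') as [->|Hne]. lra.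
    left. apply Hmono; auto; lia. }
  set (alpha := fun m : Z => c + q * IZR m).
  assert (Hmid : forall m r, 0 <= r <= Rp -> f (m - 1)%Z r < alpha m < f m r).
  { intros m r Hr. pose proof (Hb (m-1)%Z r Hr). pose proof (Hb m r Hr).
    rewrite minus_IZR in H. unfold alpha. lra. }
  assert (Hnotbtw : forall k m r, 0 <= r <= Rp -> ~ (f (m - 1)%Z r < f k r < f m r)).
  { intros k m r Hr [H1 H2]. destruct (Z.le_gt_cases k (m-1)).
    - pose proof (Hmonole k (m-1)%Z r Hr H). lra.
    - assert (m <= k)%Z by lia. pose proof (Hmonole m k r Hr H0). lra. }
  assert (Hnza : forall m k r, 0 <= r <= Rp -> alpha m <> f k r).
  { intros m k r Hr E. apply (Hnotbtw k m r Hr). rewrite <- E. apply Hmid; auto. }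
  assert (Htheta : forall l, theta l = alpha (2 * l)%Z).
  { intro l. unfold theta, alpha, c, q. rewrite mult_IZR. field. lra. }
  assert (HphiC : forall r th, Rabs r <= Rp -> @continuous C_UniformSpace C_UniformSpace phi (gam z0 r th)).
  { intros r th Hr.
    assert (Hc := ex_derive_continuous (K:=C_AbsRing) (V:=C_NormedModule) phi (gam z0 r th)
      (Hphi _ (Hdisk _ (eq_ind_r (fun a => a <= Rp) Hr (Cmod_gam z0 r th))))).
    intros P HP. apply loc_conv. apply Hc. exact HP. }
  assert (Hre : forall r th, Rabs r <= Rp ->
     Re (Cminus (p (gam z0 r th)) (p z0)) = r ^ mu * Gf p0 phi z0 u r th).
  { intros r th Hr. rewrite (Hform (gam z0 r th)) by (apply Hdisk; rewrite Cmod_gam; exact Hr).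
    rewrite gam_minus, Cpow_polar. unfold Gf. fold u.
    set (w := phi (gam z0 r th)). destruct w as [a b]. destruct p0 as [x y]. destruct (p z0) as [P1 P2].
    unfold Re, Cminus, Cplus, Copp, Cmult, Cexpi, RtoC; simpl. ring. }
  assert (Hpos : forall r, 0 < r -> 0 < r ^ mu) by (intros; apply pow_lt; lra).
  assert (HGzero : forall s th, 0 < s <= Rp -> (Gf p0 phi z0 u s th = 0 <-> exists k, th = f k s)).
  { intros s th Hs. rewrite <- Hzeros by exact Hs. rewrite z_eq, Hre by (rewrite Rabs_right; lra).
    specialize (Hpos s (proj1 Hs)).
    replace (s ^ mu * Gf p0 phi z0 u s th / s ^ mu) with (Gf p0 phi z0 u s th) by (field; lra).
    tauto. }
  assert (HM : 0 < Cmod p0).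
  { destruct (Cmod_ge_0 p0) as [H|H]; auto. exfalso. apply Hp0. apply Cmod_eq_0. auto. }
  assert (HG0 : forall th, Gf p0 phi z0 u 0 th = - Cmod p0 * cos (omega0 + u * th)).
  { intro th. unfold Gf.
    assert (E : gam z0 0 th = z0) by (destruct z0; unfold gam; simpl; apply injective_projections; simpl; ring).
    rewrite E, Hphi0. remember (Cmod p0) as M.
    rewrite Hpolar. unfold Cexpi, Cmult, RtoC; simpl. rewrite cos_plus. ring. }
  assert (HG0a : forall m, Gf p0 phi z0 u 0 (alpha m) = - Cmod p0 * cos (PI * IZR m)).
  { intro m. rewrite HG0. f_equal. f_equal. unfold alpha, c, q. field. lra. }
  assert (HG0e : forall l, Gf p0 phi z0 u 0 (alpha (2 * l)%Z) < 0).
  { intro l. rewrite HG0a, cos_piZ_even. lra. }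
  assert (HG0o : forall l, Gf p0 phi z0 u 0 (alpha (2 * l + 1)%Z) > 0).
  { intro l. rewrite HG0a, cos_piZ_odd. lra. }
  assert (HNZ : forall s m, 0 <= s <= Rp -> Gf p0 phi z0 u s (alpha m) <> 0).
  { intros s m Hs E. destruct (Req_dec s 0) as [->|Hs0].
    - destruct (parity m) as [l [-> | ->]]; [pose proof (HG0e l) | pose proof (HG0o l)]; lra.
    - apply HGzero in E; [|lra]. destruct E as [k Ek]. apply (Hnza m k s Hs Ek). }
  assert (HS : forall m s, 0 <= s <= Rp ->
     Gf p0 phi z0 u s (alpha m) * Gf p0 phi z0 u 0 (alpha m) > 0).
  { intros m s Hs. destruct (Rlt_le_dec 0 (Gf p0 phi z0 u s (alpha m) * Gf p0 phi z0 u 0 (alpha m))) as [H|H]; [exact H|exfalso].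
    set (rho := fun t => s * (sin t * sin t)).
    assert (Hrho : forall t, 0 <= rho t <= s).
    { intro t. unfold rho. pose proof (SIN_bound t).
      assert (0 <= sin t * sin t <= 1) by nra. split; [apply Rmult_le_pos; lra|].
      rewrite <- (Rmult_1_r s) at 2. apply Rmult_le_compat_l; lra. }
    assert (Hc : continuity (fun t => Gf p0 phi z0 u (rho t) ((fun _ => alpha m) t))).
    { apply Gf_cont.
      - intro t. unfold rho. apply continuity_pt_mult. apply continuity_pt_const; intros ? ?; reflexivity.
        apply continuity_pt_mult; apply continuity_sin.
      - intro t. apply continuity_pt_const; intros ? ?; reflexivity.
      - intro t. apply HphiC. pose proof (Hrho t). rewrite Rabs_right; lra. }
    destruct (ivt_zero _ Hc 0 (PI/2)) as [x [_ Hx]].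
    { simpl. unfold rho. rewrite sin_0, sin_PI2.
      replace (s * (0 * 0)) with 0 by ring. replace (s * (1 * 1)) with s by ring. lra. }
    simpl in Hx. apply (HNZ (rho x) m); [pose proof (Hrho x); lra | exact Hx]. }
  assert (HD : forall s th m, 0 < s <= Rp -> f (m - 1)%Z s < th < f m s ->
      Gf p0 phi z0 u s th * Gf p0 phi z0 u s (alpha m) > 0).
  { intros s th m Hs Hth.
    destruct (Rlt_le_dec 0 (Gf p0 phi z0 u s th * Gf p0 phi z0 u s (alpha m))) as [H|H]; [exact H|exfalso].
    assert (Hc : continuity (fun t => Gf p0 phi z0 u ((fun _ => s) t) ((fun t => t) t))).
    { apply Gf_cont.
      - intro t. apply continuity_pt_const; intros ? ?; reflexivity.
      - intro t. apply derivable_continuous_pt, derivable_pt_id.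
      - intro t. apply HphiC. rewrite Rabs_right; lra. }
    destruct (ivt_zero _ Hc th (alpha m)) as [x [Hxr Hx]]; [simpl; exact H|].
    simpl in Hx. apply HGzero in Hx; [|exact Hs]. destruct Hx as [k ->].
    apply (Hnotbtw k m s); [lra|].
    pose proof (Hmid m s ltac:(lra)).
    unfold Rmin, Rmax in Hxr. destruct (Rle_dec th (alpha m)); lra. }
  split; [|split].
  - intros l r Hr. rewrite Htheta. apply Hmid. exact Hr.
  - intros l r Hr. rewrite Htheta, z_eq, Hre by (rewrite Rabs_right; lra).
    pose proof (HS (2*l)%Z r ltac:(lra)). pose proof (HG0e l). pose proof (Hpos r (proj1 Hr)).
    assert (Gf p0 phi z0 u r (alpha (2 * l)%Z) < 0) by nra. nra.
  - intros s th Hs. rewrite z_eq, Hre by (rewrite Rabs_right; lra).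
    pose proof (Hpos s (proj1 Hs)). split.
    + intro Hneg.
      assert (HGn : Gf p0 phi z0 u s th < 0) by nra.
      assert (Hex : exists m, f (m - 1)%Z s < th < f m s).
      { set (x := (th - c) / q). set (n := (up x - 1)%Z).
        destruct (archimed x) as [A1 A2].
        assert (En : IZR n = IZR (up x) - 1) by (unfold n; rewrite minus_IZR; reflexivity).
        assert (Eth : th = c + q * x) by (unfold x; field; lra).
        assert (L1 : alpha n <= th).
        { unfold alpha. rewrite En, Eth. apply Rplus_le_compat_l, Rmult_le_compat_l; lra. }
        assert (L2 : th < alpha (n + 1)%Z).
        { unfold alpha. rewrite plus_IZR, En, Eth. apply Rplus_lt_compat_l, Rmult_lt_compat_l; lra. }
        destruct (Rtotal_order th (f n s)) as [Hlt|[Heq|Hgt]].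
        - exists n. pose proof (Hmid n s ltac:(lra)). lra.
        - exfalso. assert (Gf p0 phi z0 u s th = 0) by (apply HGzero; [exact Hs| exists n; exact Heq]). lra.
        - exists (n + 1)%Z. replace (n + 1 - 1)%Z with n by ring.
          pose proof (Hmid (n+1)%Z s ltac:(lra)). lra. }
      destruct Hex as [m Hm].
      pose proof (HD s th m Hs Hm). pose proof (HS m s ltac:(lra)).
      assert (Gf p0 phi z0 u s (alpha m) < 0) by nra.
      assert (Gf p0 phi z0 u 0 (alpha m) < 0) by nra.
      destruct (parity m) as [l [-> | ->]].
      * exists l. exact Hm.
      * pose proof (HG0o l). lra.
    + intros [l Hl].
      pose proof (HD s th (2*l)%Z Hs Hl). pose proof (HS (2*l)%Z s ltac:(lra)). pose proof (HG0e l).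
      assert (Gf p0 phi z0 u s (alpha (2 * l)%Z) < 0) by nra.
      assert (Gf p0 phi z0 u s th < 0) by nra.
      nra.
Qed.
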